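(* Let $\mathcal{H}\subseteq\{0,1\}^{\mathcal{X}}$ be a hypothesis class and $\omega_m$ the clique number of $G_m(\mathcal{H})$. Then for all $m\ge1$, $\omega_m\le(2m+1)^{\mathtt{LD}(\mathcal{H})}\le(2m+1)^{\mathtt{CD}(\mathcal{H})}$.
   Context: A dataset of size $m$ is $S=((x_1,y_1),\dots,(x_m,y_m))\in(\mathcal{X}\times\{0,1\})^m$; it is $\mathcal{H}$-realizable if some $h\in\mathcal{H}$ satisfies $h(x_i)=y_i$ for all $i$. $G_m(\mathcal{H})$ is the graph on realizable datasets of size $m$ with $S,S'$ adjacent iff there is $x$ with $(x,0)$ appearing in $S$ and $(x,1)$ appearing in $S'$; $\omega_m$ is its clique number; $\mathtt{CD}(\mathcal{H})=\sup\{m:\omega_m=2^m\}$. A mistake tree is a complete binary tree whose internal nodes are labeled by points of $\mathcal{X}$, each internal node having one outgoing edge labeled $0$ and one labeled $1$; a root-to-leaf path yields the sequence of (node label, edge label) pairs. $\mathcal{H}$ shatters the tree if every root-to-leaf path is realizable by $\mathcal{H}$. $\mathtt{LD}(\mathcal{H})$ is the largest depth of a complete mistake tree shattered by $\mathcal{H}$ ($\infty$ if unbounded). *)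

(* Defs.v *)
From mathcomp Require Import all_boot.
From mathcomp Require Import boolp.
Set Implicit Arguments. Unset Strict Implicit. Unset Printing Implicit Defensive.

(* ---------- extended naturals: Some n = n, None = infinity ---------- *)
Definition enat := option nat.

Definition enat_le (a b : enat) : Prop :=
  match a, b with
  | _, None => True
  | None, Some _ => False
  | Some x, Some y => (x <= y)%N
  end.

(* b ^ e for a natural base b and extended exponent e; b ^ oo = oo
   (used only with b = 2m+1 >= 3). *)
Definition epow (b : nat) (e : enat) : enat :=
  match e with Some d => Some (b ^ d)%N | None => None end.

Lemma nsup_ex (P : nat -> Prop) :
  (exists n, forall k, P k -> (k <= n)%N) ->
  exists n, `[< forall k, P k -> (k <= n)%N >].
Proof. by case=> n Hn; exists n; apply: asboolT. Qed.

(* supremum in N ∪ {oo} of a set of naturals; sup of the empty set is 0 *)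
Definition nsup (P : nat -> Prop) : enat :=
  match pselect (exists n, forall k, P k -> (k <= n)%N) with
  | left e => Some (ex_minn (nsup_ex e))
  | right _ => None
  end.

Section Learning.
Variable X : Type.

(* hypothesis class H ⊆ {0,1}^X; label 0 = false, 1 = true *)
Definition hclass := (X -> bool) -> Prop.

Definition dataset (m : nat) := 'I_m -> X * bool.

Definition realizable (H : hclass) m (S : dataset m) : Prop :=
  exists h, H h /\ forall i, h (S i).1 = (S i).2.

Definition adj m (S S' : dataset m) : Prop :=
  exists x, (exists i, S i = (x, false)) /\ (exists j, S' j = (x, true)).

(* a clique of size k in G_m(H): k distinct realizable datasets,
   pairwise adjacent (the graph is undirected) *)
Definition is_clique (H : hclass) m k (C : 'I_k -> dataset m) : Prop :=
  injective C /\ (forall i, realizable H (C i)) /\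
  (forall i j, i <> j -> adj (C i) (C j) \/ adj (C j) (C i)).

Definition omega (H : hclass) m : enat :=
  nsup (fun k => exists C : 'I_k -> dataset m, is_clique H C).

Definition CD (H : hclass) : enat :=
  nsup (fun m => omega H m = Some (2 ^ m)%N).

Inductive mtree : Type :=
| Leaf : mtree
| Node : X -> mtree -> mtree -> mtree.  (* Node x t0 t1: edge 0 to t0, 1 to t1 *)

Fixpoint complete (d : nat) (t : mtree) : Prop :=
  match d, t with
  | 0, Leaf => True
  | d'.+1, Node _ t0 t1 => complete d' t0 /\ complete d' t1
  | _, _ => False
  end.

(* root-to-leaf paths as sequences of (node label, edge label) *)
Fixpoint tpath (t : mtree) (p : seq (X * bool)) : Prop :=
  match t, p with
  | Leaf, [::] => True
  | Node x t0 t1, (x', y) :: p' =>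
      x' = x /\ (if y then tpath t1 p' else tpath t0 p')
  | _, _ => False
  end.

Fixpoint consistent (h : X -> bool) (p : seq (X * bool)) : Prop :=
  match p with
  | [::] => True
  | (x, y) :: p' => h x = y /\ consistent h p'
  end.

Definition shatters (H : hclass) (t : mtree) : Prop :=
  forall p, tpath t p -> exists h, H h /\ consistent h p.

Definition LD (H : hclass) : enat :=
  nsup (fun d => exists t, complete d t /\ shatters H t).

End Learning.

(* Main.v *)
From Stdlib Require Import Classical.
Require Import Defs.
From mathcomp Require Import all_boot boolp zify.
Set Implicit Arguments. Unset Strict Implicit. Unset Printing Implicit Defensive.


Lemma nsup_le (P : nat -> Prop) n : (forall k, P k -> k <= n) -> enat_le (nsup P) (Some n).
Proof.
move=> Hn; rewrite /nsup; case: pselect => [e|ne]; last by exfalso; apply: ne; exists n.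
rewrite /=; case: ex_minnP => c _ Hmin; apply: Hmin; exact/asboolP.
Qed.

Lemma nsup_ub (P : nat -> Prop) n : nsup P = Some n -> forall k, P k -> k <= n.
Proof.
rewrite /nsup; case: pselect => [e|//] [<-]; case: ex_minnP => c /asboolP Hc _ //.
Qed.

Lemma nsup_min (P : nat -> Prop) n c : nsup P = Some n -> (forall k, P k -> k <= c) -> n <= c.
Proof.
rewrite /nsup; case: pselect => [e|//] [<-] Hc; case: ex_minnP => c' _ Hm; apply: Hm; exact/asboolP.
Qed.

Lemma nsup_exact (P : nat -> Prop) n : P n -> (forall k, P k -> k <= n) -> nsup P = Some n.
Proof.
move=> Pn Hn; rewrite /nsup; case: pselect => [e|ne]; last by exfalso; apply ne; exists n.
congr Some; case: ex_minnP => c /asboolP Hc Hm.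
by apply/eqP; rewrite eqn_leq Hc // Hm //; apply/asboolP.
Qed.

Section B.
Variable X : Type.
Definition restr (V : hclass X) x y : hclass X := fun h => V h /\ h x = y.
Definition noshat (V : hclass X) n := forall t : mtree X, complete n t -> ~ shatters V t.

Lemma split_maj V n x : noshat V n.+2 -> exists y, noshat (restr V x y) n.+1.
Proof.
move=> HV; apply: NNPP => Hn.
have H0 : ~ noshat (restr V x false) n.+1 by move=> H; apply: Hn; exists false.
have H1 : ~ noshat (restr V x true) n.+1 by move=> H; apply: Hn; exists true.
have [t0 H0'] := not_all_ex_not _ _ H0.
have [c0 s0] := imply_to_and _ _ H0'.
have [t1 H1'] := not_all_ex_not _ _ H1.
have [c1 s1] := imply_to_and _ _ H1'.
move/NNPP: s0 => s0; move/NNPP: s1 => s1.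
apply: (HV (Node x t0 t1)); first by split.
move=> [|[x' y] p] //= [-> Hp].
case: y Hp => Hp.
- by have [h [[Vh hx] hp]] := s1 p Hp; exists h.
- by have [h [[Vh hx] hp]] := s0 p Hp; exists h.
Qed.

Lemma clique_B m d (V : hclass X) k (C : 'I_k -> dataset X m) (A : {set 'I_k}) :
  noshat V d.+1 ->
  (forall i, i \in A -> realizable V (C i)) ->
  (forall i j, i \in A -> j \in A -> i != j -> adj (C i) (C j) \/ adj (C j) (C i)) ->
  #|A| <= (2*m+1)^d.
Proof.
elim: d V A => [|d IH] V A HV Hr Hadj.
  rewrite expn0 leqNgt; apply/negP => /card_gt1P [i [j [iA jA ij]]].
  have base: forall S S', realizable V S -> realizable V S' -> @adj X m S S' -> False.
    move=> S S' [h [Vh hS]] [h' [Vh' hS']] [x [[a Ha] [b Hb]]].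
    have c1 : complete 1 (Node x (@Leaf X) (@Leaf X)) by split.
    apply: (HV _ c1).
    move=> [|[x' y] p] //= [-> Hp]; case: y Hp; case: p => //= _.
    + exists h'; split => //; split => //; by have := hS' b; rewrite Hb.
    + exists h; split => //; split => //; by have := hS a; rewrite Ha.
  by case: (Hadj i j iA jA ij) => /base; apply; apply: Hr.
have /choice [y Hy] : forall x, exists y, noshat (restr V x y) d.+1.
  by move=> x; exact: split_maj.
pose out i j := exists p q, C j q = ((C i p).1, y (C i p).1).
pose G i p := [set j in A | `[< exists q, C j q = ((C i p).1, y (C i p).1) >] ].
pose b i j : nat := ((j != i) && `[< out i j >]).
pose O i := [set j in A | (j != i) && `[< out i j >] ].
have HG : forall i p, #|G i p| <= (2*m+1)^d.
  move=> i p; apply: (IH _ _ (Hy (C i p).1)).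
  + move=> j; rewrite inE => /andP [jA /asboolP [q Hq]].
    have [h [Vh hS]] := Hr j jA; exists h; split => //; split => //.
    by have := hS q; rewrite Hq.
  + move=> j j'; rewrite !inE => /andP [jA _] /andP [j'A _]; exact: Hadj.
have HO : forall i, #|O i| <= m * (2*m+1)^d.
  move=> i.
  have sub : O i \subset \bigcup_(p < m) G i p.
    apply/subsetP => j; rewrite inE => /andP [jA /andP [_ /asboolP [p [q Hq]]]].
    apply/bigcupP; exists p => //; rewrite inE jA; apply/asboolP; by exists q.
  apply: (leq_trans (subset_leq_card sub)).
  apply: (@leq_trans (\sum_(p < m) #|G i p|)).
    elim/big_rec2: _ => [|p U n _ Hn]; first by rewrite cards0.
    apply: leq_trans (leq_of_leqif (leq_card_setU _ _)) _.
    by rewrite leq_add2l.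
  apply: (@leq_trans (\sum_(p < m) (2*m+1)^d)); first exact: leq_sum.
  by rewrite sum_nat_const card_ord.
have Hpair : forall i j, i \in A -> j \in A -> i != j -> out i j \/ out j i.
  move=> i j iA jA ij.
  case: (Hadj i j iA jA ij) => [[x [[a Ha] [c Hc]]]|[x [[a Ha] [c Hc]]]].
  + case E: (y x).
    * by left; exists a, c; rewrite Ha /= E.
    * by right; exists c, a; rewrite Hc /= E.
  + case E: (y x).
    * by right; exists a, c; rewrite Ha /= E.
    * by left; exists c, a; rewrite Hc /= E.
have HOb : forall i, #|O i| = \sum_(j in A) b i j.
  move=> i; rewrite -sum1_card big_mkcond [RHS]big_mkcond; apply: eq_bigr => j _.
  by rewrite inE /b; case: (j \in A) => //=; case: (_ && _).
set a := #|A|; set P := (2*m+1)^d.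
have h2 : \sum_(i in A) #|O i| <= a * (m * P).
  apply: (@leq_trans (\sum_(i in A) m * P)); first by apply: leq_sum => i _; exact: HO.
  by rewrite sum_nat_const.
have h1 : a * a <= 2 * \sum_(i in A) #|O i| + a.
  have -> : a * a = \sum_(i in A) \sum_(j in A) 1.
    by rewrite !sum_nat_const muln1.
  apply: (@leq_trans (\sum_(i in A) \sum_(j in A) (b i j + b j i + (j == i)))).
    apply: leq_sum => i iA; apply: leq_sum => j jA.
    case: (eqVneq j i) => [->|ji]; first by rewrite addn1.
    have ij : i != j by rewrite eq_sym.
    rewrite /b ji ij /=.
    case: (Hpair i j iA jA ij) => H.
    + by have -> : `[< out i j >] = true by apply/asboolP.
    + have -> : `[< out j i >] = true by apply/asboolP.
      by rewrite addn0; apply: ltn_addl.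
  under eq_bigr => i _ do rewrite !big_split /=.
  rewrite !big_split /=.
  rewrite [X in _ + X + _ <= _]exchange_big /=.
  have E2 : \sum_(i in A) #|O i| = \sum_(i in A) \sum_(j in A) b i j.
    by apply: eq_bigr => i _; exact: HOb.
  rewrite E2 mul2n -addnn.
  have -> : \sum_(i in A) \sum_(j in A) (j == i : nat) = a.
    rewrite /a -sum1_card; apply: eq_bigr => i iA.
    rewrite (bigD1 i) //= eqxx big1 // => j /andP [_ /negbTE ->] //.
  by [].
have aP : 0 < P by rewrite expn_gt0 addn1.
case: (posnP a) => [->|apos] //.
have : a <= 2 * (m * P) + 1.
  rewrite -(leq_pmul2l apos); apply: leq_trans h1 _.
  by rewrite mulnDr muln1 leq_add2r mulnCA leq_mul2l h2 orbT.
move=> H; apply: leq_trans H _.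
by rewrite expnS mulnDl mul1n mulnA leq_add2l.
Qed.
End B.


Section Kraft.
Variable Y : eqType.
Definition cons_s (s : seq (Y*bool)) := forall x, ~ ((x,false) \in s /\ (x,true) \in s).
Definition conf (s s' : seq (Y*bool)) := exists x b, (x,b) \in s /\ (x, ~~ b) \in s'.

Lemma kraft M N n (F : 'I_n -> seq (Y*bool)) (A : {set 'I_n}) :
  \sum_(i in A) size (F i) <= N ->
  (forall i, i \in A -> size (F i) <= M) ->
  (forall i, i \in A -> cons_s (F i)) ->
  (forall i j, i \in A -> j \in A -> i != j -> conf (F i) (F j)) ->
  \sum_(i in A) 2 ^ (M - size (F i)) <= 2 ^ M.
Proof.
elim: N F A => [|N IH] F A Hs HM Hc Hf;
  (have [A1|] := leqP #|A| 1; [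
    apply: (@leq_trans (\sum_(i in A) 2^M));
      [by apply: leq_sum => i _; apply: leq_pexp2l => //; exact: leq_subr
      |by rewrite sum_nat_const -{2}(mul1n (2^M)) leq_mul2r A1 orbT] | ]);
  move=> /card_gt1P [i [j [iA jA ij]]]; have [x [b [xi xj]]] := Hf i j iA jA ij.
  have : 0 < size (F i) by case: (F i) xi.
  move=> Hp; move: Hs; rewrite (bigD1 i) //= leqn0 addn_eq0 => /andP [/eqP H _].
  by rewrite H in Hp.
have Hex : forall c, exists2 k, k \in A & (x, c) \in F k.
  move=> c; case: (eqVneq b c) => [<-|]; first by exists i.
  move=> bc; exists j => //.
  by have -> : c = ~~ b by move: bc; clear; case: b; case: c.
pose G k := filter (fun p : Y*bool => p.1 != x) (F k).
have HGle : forall k, size (G k) <= size (F k).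
  by move=> k; rewrite size_filter count_size.
have HGlt : forall k c, (x, c) \in F k -> size (G k) < size (F k).
  move=> k c H; rewrite size_filter -(count_predC (fun p : Y*bool => p.1 != x) (F k)).
  rewrite -{1}(addn0 (count _ _)) ltn_add2l -has_count; apply/hasP.
  by exists (x, c) => //=; rewrite negbK.
have HGeq : forall k, (x, false) \notin F k -> (x, true) \notin F k -> G k = F k.
  move=> k h0 h1; apply/all_filterP/allP => [[y c]] /= Hyc.
  by apply/eqP => E; move: Hyc; rewrite E; case: c; [move/negP: h1|move/negP: h0].
pose w k := 2 ^ (M - size (F k)).
have Hc2 : forall c, 2 * \sum_(k in A | (x, c) \in F k) w k +
    \sum_(k in A | ((x, false) \notin F k) && ((x, true) \notin F k)) w k <= 2 ^ M.
  move=> c.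
  pose B := [set k in A | (x, ~~ c) \notin F k].
  have HB := IH G B.
  have [kt ktA ktF] := Hex (~~ c).
  have HB1 : \sum_(k in B) size (G k) <= N.
    apply: (@leq_trans (\sum_(k in B) size (F k))); first by apply: leq_sum => k _.
    rewrite -ltnS; apply: leq_trans Hs.
    rewrite [X in _ < X](bigID (fun k => (x, ~~ c) \in F k)) /=.
    have -> : \sum_(k in B) size (F k) = \sum_(k in A | (x, ~~ c) \notin F k) size (F k).
      by apply: eq_bigl => k; rewrite inE.
    rewrite addnC -addn1 leq_add2l (bigD1 kt) ?ktA ?ktF //=.
    apply: leq_trans (leq_addr _ _); by case: (F kt) ktF.
  have HB2 : forall k, k \in B -> size (G k) <= M.
    by move=> k; rewrite inE => /andP [kA _]; apply: leq_trans (HGle k) (HM k kA).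
  have HB3 : forall k, k \in B -> cons_s (G k).
    move=> k; rewrite inE => /andP [kA _] y [].
    by rewrite !mem_filter => /andP [_ h0] /andP [_ h1]; apply: (Hc k kA y).
  have HB4 : forall k l, k \in B -> l \in B -> k != l -> conf (G k) (G l).
    move=> k l; rewrite !inE => /andP [kA kn] /andP [lA ln] kl.
    have [y [e [yk yl]]] := Hf k l kA lA kl.
    case: (eqVneq y x) => [E|yx].
      exfalso; move: yk yl kn ln; rewrite E => yk yl kn ln.
      have [h|h] : ~~ c = e \/ ~~ c = ~~ e by case: (c); case: (e); auto.
        by move/negP: kn; rewrite h.
      by move/negP: ln; rewrite h.
    by exists y, e; rewrite !mem_filter /= yx yk yl.
  have := HB HB1 HB2 HB3 HB4.
  apply: leq_trans.
  rewrite [X in _ <= X](bigID (fun k => (x, c) \in F k)) /=.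
  apply: leq_add.
    rewrite big_distrr /=.
    apply: (@leq_trans (\sum_(k in B | (x, c) \in F k) 2 * w k)).
      apply: eq_leq; apply: eq_bigl => k; rewrite inE -andbA.
      case kA: (k \in A); rewrite ?andFb // ?andTb.
      case kc: ((x, c) \in F k); rewrite ?andbF ?andbT //.
      symmetry; apply/negP => kc'; apply: (Hc k kA x).
      by case: (c) kc kc' => /= -> ->.
    apply: leq_sum => k; rewrite inE => /andP [/andP [kA _] kc].
    rewrite /w -expnS; apply: leq_pexp2l => //.
    have := HGlt k c kc; have := HM k kA; move: (size (G k)) (size (F k)) => g f.
    move=> H1 H2; lia.
  apply: (@leq_trans (\sum_(k in B | (x, c) \notin F k) w k)).
    apply: eq_leq; apply: eq_bigl => k; rewrite inE.
    case: (k \in A); rewrite ?andbF ?andFb // ?andTb; case: (c) => /=; by case: ((x, false) \in F k); case: ((x, true) \in F k).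
  apply: leq_sum => k _; rewrite /w; apply: leq_pexp2l => //; apply: leq_sub2l; exact: HGle.
have Hpart : \sum_(k in A) w k = \sum_(k in A | (x, true) \in F k) w k +
    \sum_(k in A | (x, false) \in F k) w k +
    \sum_(k in A | ((x, false) \notin F k) && ((x, true) \notin F k)) w k.
  rewrite (bigID (fun k => (x, true) \in F k)) /= -addnA; congr (_ + _).
  rewrite (bigID (fun k => (x, false) \in F k)) /=; congr (_ + _).
    apply: eq_bigl => k; case kA: (k \in A) => //=.
    case k0: ((x, false) \in F k); rewrite ?andbF ?andbT //.
    by apply/negP => k1; apply: (Hc k kA x).
  by apply: eq_bigl => k; case: (k \in A); rewrite //= andbC.
have := leq_add (Hc2 true) (Hc2 false).
rewrite Hpart.
set s1 := \sum_(k in A | (x, true) \in F k) w k.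
set s0 := \sum_(k in A | (x, false) \in F k) w k.
set sn := \sum_(k in A | _ && _) w k.
move: s1 s0 sn => s1 s0 sn; lia.
Qed.
End Kraft.


Section Constr.
Variable X : Type.
Local Notation Y := {classic X}.

Fixpoint pathOf (t : mtree X) (bs : seq bool) : seq (Y * bool) :=
  match t, bs with
  | Node x t0 t1, b :: bs' => (x, b) :: pathOf (if b then t1 else t0) bs'
  | _, _ => [::]
  end.

Lemma path_ok k t bs : complete k t -> size bs = k ->
  tpath t (pathOf t bs) /\ size (pathOf t bs) = k.
Proof.
elim: k t bs => [|k IH] [|x t0 t1] [|b bs] //= Hc [Hs].
case: b; [have [h1 h2] := IH t1 bs Hc.2 Hs | have [h1 h2] := IH t0 bs Hc.1 Hs];
  by rewrite h2.
Qed.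

Lemma path_conf k t bs bs' : complete k t -> size bs = k -> size bs' = k -> bs != bs' ->
  conf (pathOf t bs) (pathOf t bs').
Proof.
elim: k t bs bs' => [|k IH] [|x t0 t1] [|b bs] [|b' bs'] //= Hc [Hs] [Hs'].
rewrite eqseq_cons; case: (eqVneq b b') => [<-|bb'] /= H.
  have Hc' : complete k (if b then t1 else t0) by case: (b); [exact: Hc.2|exact: Hc.1].
  have [y [c [h1 h2]]] := IH _ _ _ Hc' Hs Hs' H.
  by exists y, c; rewrite !in_cons h1 h2 !orbT.
exists x, b; rewrite !in_cons eqxx /=; split => //.
have -> : b' = ~~ b by move: bb'; case: (b); case: (b').
by rewrite eqxx.
Qed.

Lemma consistent_mem (h : X -> bool) (p : seq (Y * bool)) :
  consistent h p -> forall q, q \in p -> h q.1 = q.2.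
Proof.
elim: p => [//|[y c] p IH] /= [hy hp] q; rewrite in_cons => /orP [/eqP -> //|].
exact: IH.
Qed.

Lemma clique_ub (H : hclass X) k n (C : 'I_n -> dataset X k) : is_clique H C -> n <= 2^k.
Proof.
move=> [_ [Hr Hadj]].
pose F i := [seq (C i p : Y * bool) | p <- enum 'I_k].
have memF : forall i y c, (y, c) \in F i -> exists p, C i p = (y, c).
  by move=> i y c /mapP [p _ E]; exists p; rewrite -E.
have HF : forall i, size (F i) = k by move=> i; rewrite size_map size_enum_ord.
have := @kraft Y k (n * k) n F [set: 'I_n].
have -> : \sum_(i in [set: 'I_n]) 2 ^ (k - size (F i)) = n.
  rewrite (eq_bigr (fun _ => 1)); first by rewrite sum1_card cardsT card_ord.
  by move=> i _; rewrite HF subnn.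
apply.
- rewrite (eq_bigr (fun _ => k)); last by move=> i _; rewrite HF.
  by rewrite sum_nat_const cardsT card_ord.
- by move=> i _; rewrite HF.
- move=> i _ y [/memF [p Hp] /memF [q Hq]].
  have [h [_ hh]] := Hr i.
  by have := hh p; have := hh q; rewrite Hp Hq /= => ->.
- move=> i j _ _ ij.
  have mF : forall i p, (C i p : Y * bool) \in F i by move=> i' p; apply: map_f; rewrite mem_enum.
  have ij' : i <> j by move/eqP: ij.
  case: (Hadj i j ij') => [[y [[a Ha] [b Hb]]]|[y [[a Ha] [b Hb]]]].
  + exists y, false; split; [rewrite -Ha|rewrite /= -Hb]; exact: mF.
  + exists y, true; split; [rewrite -Hb|rewrite /= -Ha]; exact: mF.
Qed.

Lemma clique_exists (H : hclass X) k t : complete k t -> shatters H t ->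
  exists C : 'I_(2^k) -> dataset X k, is_clique H C.
Proof.
case: k t => [|k] [|x t0 t1] //= Hc Hs.
  have [h [Hh _]] := Hs [::] I.
  have d0 : dataset X 0 by case=> i; rewrite ltn0.
  exists (fun _ => d0); split; first by move=> a b _; rewrite (ord1 a) (ord1 b).
  split; first by move=> _; exists h; split => // [[i Hi]]; exfalso; rewrite ltn0 in Hi.
  by move=> a b; rewrite (ord1 a) (ord1 b).
have Hc' : complete k.+1 (Node x t0 t1) := Hc.
set t := Node x t0 t1 in Hc' Hs.
have E : #|{:k.+1.-tuple bool}| = 2 ^ k.+1 by rewrite card_tuple card_bool.
pose bits (j : 'I_(2^k.+1)) : seq bool := tval (enum_val (cast_ord (esym E) j)).
pose d : X * bool := (x, false).
pose p j := pathOf t (bits j).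
pose C j : dataset X k.+1 := fun i => nth d (p j) i.
have Hsz : forall j, size (bits j) = k.+1 by move=> j; rewrite /bits size_tuple.
have Hp : forall j, tpath t (p j) /\ size (p j) = k.+1.
  by move=> j; apply: path_ok.
have Hreal : forall j, realizable H (C j).
  move=> j; have [Htp Hps] := Hp j; have [h [Hh hc]] := Hs _ Htp.
  exists h; split => // i; apply: (consistent_mem hc); apply: mem_nth.
  by rewrite Hps.
have memC : forall j y c, (y, c) \in p j -> exists i, C j i = (y, c).
  move=> j y c /(nthP (d : Y * bool)) [i Hi Ei]; have [_ Hps] := Hp j.
  rewrite Hps in Hi; by exists (Ordinal Hi).
have Hadj : forall j j', j != j' -> adj (C j) (C j') \/ adj (C j') (C j).
  move=> j j' jj.
  have bb : bits j != bits j'.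
    apply/negP => /eqP /val_inj /enum_val_inj /cast_ord_inj E'; by rewrite E' eqxx in jj.
  have [y [c [h1 h2]]] := path_conf Hc' (Hsz j) (Hsz j') bb.
  have [a Ha] := memC _ _ _ h1; have [b Hb] := memC _ _ _ h2.
  move: Ha Hb; clear h1 h2; case: c => Ha Hb.
  + by right; exists y; split; [exists b|exists a].
  + by left; exists y; split; [exists a|exists b].
exists C; split; last split => //.
  move=> j j' Ejj; case: (eqVneq j j') => // jj; exfalso.
  have [h [_ hh]] := Hreal j.
  case: (Hadj j j' jj) => [[y [[a Ha] [b Hb]]]|[y [[a Ha] [b Hb]]]].
    move: Hb; rewrite -Ejj => Hb.
    by have := hh a; have := hh b; rewrite Ha Hb /= => ->.
  move: Ha; rewrite -Ejj => Ha.
  by have := hh a; have := hh b; rewrite Ha Hb /= => ->.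
by move=> j j' jj; apply: Hadj; apply/eqP.
Qed.

Lemma omega_exact (H : hclass X) k t : complete k t -> shatters H t -> omega H k = Some (2^k).
Proof.
move=> Hc Hs; apply: nsup_exact; first exact: clique_exists Hc Hs.
by move=> n [C HC]; exact: clique_ub HC.
Qed.
End Constr.

Theorem mainTheorem11 (X : Type) (H : hclass X) (m : nat) :
  (1 <= m)%N ->
  enat_le (omega H m) (epow (2 * m + 1) (LD H)) /\
  enat_le (epow (2 * m + 1) (LD H)) (epow (2 * m + 1) (CD H)).
Proof.
move=> m1.
have key : forall k, (exists t, complete k t /\ shatters H t) -> omega H k = Some (2 ^ k).
  by move=> k [t [Hc Hs]]; exact: omega_exact Hc Hs.
split.
  case ELD: (LD H) => [d|] /=; last by case: (omega H m).
  have ns : noshat H d.+1.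
    move=> t Hc Hs; have := nsup_ub ELD (ex_intro _ t (conj Hc Hs)).
    by rewrite ltnn.
  apply: nsup_le => n [C [_ [Hr Hadj]]].
  have := @clique_B X m d H n C [set: 'I_n] ns (fun i _ => Hr i).
  rewrite cardsT card_ord; apply => i j _ _ /eqP; exact: Hadj.
case ECD: (CD H) => [c|]; last by case: (epow _ (LD H)).
have ub : forall k, (exists t, complete k t /\ shatters H t) -> k <= c.
  by move=> k Hk; apply: (nsup_ub ECD); exact: key.
case ELD: (LD H) => [d|] /=.
  rewrite leq_exp2l; first exact: nsup_min ELD ub.
  by rewrite addn1 ltnS muln_gt0 m1.
have := nsup_le ub; rewrite -/(LD H) ELD /=; by [].
Qed.
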